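(* Let $p\geq 0$ be an integer, let $T$ be a tree with at least $p$ vertices and $H$ a connected graph with at least $2p$ vertices. Let $V\subseteq V(T(H))$ with $OC(T,V)=V(T)$, and let $V_1,V_2$ be a partition of $V$ with $|V_i|\leq |V(T(H))|-p^2$ for each $i\in\{1,2\}$. Then $T(H)$ has a matching of size $p$ in which the two ends of each edge have different roles with respect to $V_1,V_2$.
   Context: Graph $T(H)$: for a tree $T$ and a graph $H$ with $V(H)=\{1,\dots,m\}$, $T(H)$ has vertices $v^i$ ($v\in V(T)$, $1\le i\le m$); for each $v$ the vertices $v^1,\dots,v^m$ span a copy $H^v$ of $H$, and $u^iv^i$ is an edge for each $i$ whenever $uv\in E(T)$. $OC(T,V)=\{u\in V(T): V(H^u)\cap V\neq\emptyset\}$. Roles with respect to $V_1,V_2$: each vertex of $T(H)$ either belongs to $V_1$, belongs to $V_2$, or belongs to $V(T(H))\setminus V$; these are its three possible roles. *)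

(* Defs.v *)
From mathcomp Require Import all_boot.
Set Implicit Arguments. Unset Strict Implicit. Unset Printing Implicit Defensive.

Definition simple_graph (T : finType) (e : rel T) : Prop :=
  symmetric e /\ irreflexive e.

Definition connected_graph (T : finType) (e : rel T) : Prop :=
  0 < #|T| /\ forall x y : T, connect e x y.

Definition acyclic_graph (T : finType) (e : rel T) : Prop :=
  forall c : seq T, uniq c -> 2 < size c -> ~~ cycle e c.

Definition is_tree (T : finType) (e : rel T) : Prop :=
  [/\ simple_graph e, connected_graph e & acyclic_graph e].

(* The graph T(H): vertex v^i is the pair (v, i). *)
Definition TH_adj (T : finType) (eT : rel T) (m : nat) (eH : rel 'I_m)
  (x y : T * 'I_m) : bool :=
  ((x.1 == y.1) && eH x.2 y.2) || ((x.2 == y.2) && eT x.1 y.1).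

Definition OC (T : finType) (m : nat) (V : {set T * 'I_m}) : {set T} :=
  [set u | [exists i : 'I_m, (u, i) \in V]].

Definition role (X : finType) (V1 V2 : {set X}) (x : X) : nat :=
  if x \in V1 then 1 else if x \in V2 then 2 else 0.

Definition is_matching (X : finType) (adj : rel X) (M : seq (X * X)) : bool :=
  all (fun e => adj e.1 e.2) M && uniq (flatten [seq [:: e.1; e.2] | e <- M]).

(* Main.v *)
Require Import Defs.
From mathcomp Require Import all_boot.
From mathcomp Require Import zify.

Lemma mono_conn (X : finType) (e : rel X) (f : X -> nat) :
  (forall x y, connect e x y) -> (forall a b, e a b -> f a = f b) ->
  forall x y, f x = f y.
Proof.
move=> hc he x y; move/connectP: (hc x y) => [s ps ->].
elim: s x ps => [|z s IH] x //= /andP[exz pz].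
by rewrite (he _ _ exz); exact: IH.
Qed.

Lemma build (X : finType) (K : eqType) (key : X -> K) (adj : rel X)
  (good : X -> X -> bool) (s : seq K) :
  uniq s -> (forall u, u \in s -> exists x y,
     [&& adj x y, good x y, x != y, key x == u & key y == u]) ->
  exists M : seq (X * X), [/\ size M = size s, is_matching adj M,
     all (fun e => good e.1 e.2) M &
     all (fun z => key z \in s) (flatten [seq [:: e.1; e.2] | e <- M])].
Proof.
elim: s => [|u s IH] /=; first by move=> _ _; exists [::].
move=> /andP[us uqs] h.
have [M [sz mat gd ks]] := IH uqs (fun v hv => h v ltac:(by rewrite inE hv orbT)).
have [x [y /and5P[axy gxy nxy kx ky]]] := h u (mem_head u s).
exists ((x, y) :: M); move: mat; rewrite /is_matching /= => /andP[am um].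
split => //=; first by rewrite sz.
- rewrite axy am um inE negb_or nxy /= andbT.
  apply/andP; split.
  + apply/negP => hx; move: (allP ks x hx); rewrite (eqP kx).
    by move/negP: us.
  + apply/negP => hx; move: (allP ks y hx); rewrite (eqP ky).
    by move/negP: us.
- by rewrite gxy gd.
- rewrite inE kx inE ky /=.
  apply/allP => z hz; by rewrite inE (allP ks z hz) orbT.
Qed.

Theorem lemma2 (p : nat) (T : finType) (eT : rel T) (m : nat) (eH : rel 'I_m)
  (V V1 V2 : {set T * 'I_m}) :
  is_tree eT -> p <= #|T| ->
  simple_graph eH -> connected_graph eH -> 2 * p <= m ->
  OC V = [set: T] ->
  V1 :|: V2 = V -> [disjoint V1 & V2] ->
  #|V1| <= #|[set: T * 'I_m]| - p ^ 2 ->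
  #|V2| <= #|[set: T * 'I_m]| - p ^ 2 ->
  exists M : seq ((T * 'I_m) * (T * 'I_m)),
    [/\ size M = p, is_matching (TH_adj eT eH) M &
        all (fun e => role V1 V2 e.1 != role V1 V2 e.2) M].
Proof.
move=> [_ [_ cT] _] pT _ [_ cH] pm OCV hV _ h1 h2.
set rl := role V1 V2.
set R := [set u : T | [exists i, exists j, eH i j && (rl (u, i) != rl (u, j))]].
set C := [set i : 'I_m | [exists v, exists w, eT v w && (rl (v, i) != rl (w, i))]].
have goodne : forall x y : T * 'I_m, rl x != rl y -> x != y.
  by move=> x y; apply: contra => /eqP ->.
case: (leqP p #|R|) => hR.
  pose s := take p (enum R).
  have ss : size s = p by rewrite size_take -cardE; case: ltngtP hR.
  suff hs : forall u, u \in s -> exists x y, [&& TH_adj eT eH x y, rl x != rl y, x != y, x.1 == u & y.1 == u].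
    have [M [sz mat gd _]] := @build _ _ fst (TH_adj eT eH)
     (fun x y => rl x != rl y) s (take_uniq _ (enum_uniq _)) hs.
    by exists M; rewrite -ss.
  move=> u hu; have : u \in R by rewrite -mem_enum; exact: mem_take hu.
  rewrite inE => /existsP[i /existsP[j /andP[hij hne]]].
  exists (u, i), (u, j); rewrite /TH_adj /= eqxx hij hne goodne //.
case: (leqP p #|C|) => hC.
  pose s := take p (enum C).
  have ss : size s = p by rewrite size_take -cardE; case: ltngtP hC.
  suff hs : forall u, u \in s -> exists x y, [&& TH_adj eT eH x y, rl x != rl y, x != y, x.2 == u & y.2 == u].
    have [M [sz mat gd _]] := @build _ _ snd (TH_adj eT eH)
     (fun x y => rl x != rl y) s (take_uniq _ (enum_uniq _)) hs.
    by exists M; rewrite -ss.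
  move=> u hu; have : u \in C by rewrite -mem_enum; exact: mem_take hu.
  rewrite inE => /existsP[v /existsP[w /andP[hvw hne]]].
  exists (v, u), (w, u); rewrite /TH_adj /= eqxx hvw hne goodne ?orbT //.
exfalso.
have rowmono : forall u, u \notin R -> forall i j, rl (u, i) = rl (u, j).
  move=> u hu; apply: (@mono_conn _ eH) => // i j hij.
  apply/eqP; apply: contraNT hu => hne; rewrite inE.
  by apply/existsP; exists i; apply/existsP; exists j; rewrite hij.
have colmono : forall i, i \notin C -> forall v w, rl (v, i) = rl (w, i).
  move=> i hi; apply: (@mono_conn _ eT) => // v w hvw.
  apply/eqP; apply: contraNT hi => hne; rewrite inE.
  by apply/existsP; exists v; apply/existsP; exists w; rewrite hvw.
have [u0 hu0] : exists u0, u0 \notin R.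
  have : 0 < #|~: R| by rewrite cardsCs setCK; lia.
  by case/card_gt0P => u; rewrite inE => ?; exists u.
have [i0 hi0] : exists i0, i0 \notin C.
  have : 0 < #|~: C| by rewrite cardsCs setCK card_ord; lia.
  by case/card_gt0P => u; rewrite inE => ?; exists u.
set c := rl (u0, i0).
have allc : forall x, x \notin setX R C -> rl x = c.
  move=> [v j]; rewrite inE /= negb_and => /orP[hv|hj].
    by rewrite (rowmono v hv j i0) (colmono i0 hi0 v u0).
  by rewrite (colmono j hj v u0) (rowmono u0 hu0 j i0).
have cne0 : c != 0.
  have : u0 \in OC V by rewrite OCV inE.
  rewrite inE => /existsP[i hi].
  rewrite /c (rowmono u0 hu0 i0 i) /rl /role.
  move: hi; rewrite -hV inE; case: (_ \in V1) => //=.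
  by move=> ->.
have key : forall W : {set T * 'I_m}, (forall x, rl x = c -> x \in W) ->
    #|W| <= #|[set: T * 'I_m]| - p ^ 2 -> False.
  move=> W hW hWc.
  have sub : ~: W \subset setX R C.
    apply/subsetP => x; rewrite inE => hx; apply: contraNT hx => hx.
    by apply: hW; apply: allc.
  have := subset_leq_card sub; rewrite cardsX cardsCs setCK.
  have := max_card W; rewrite cardsT in hWc.
  move=> hm hle.
  have : #|R| * #|C| <= (p - 1) * (p - 1) by apply: leq_mul; lia.
  move=> hpp; have hp2 : (p - 1) * (p - 1) < p ^ 2.
    by case: p hR {hWc hpp pT pm h1 h2 hC} => // q _; rewrite subSS subn0 ltn_mul //.
  have hN : p ^ 2 <= #|[set: T * 'I_m]|.
    by rewrite cardsT card_prod card_ord expnS expn1; apply: leq_mul => //; lia.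
  rewrite cardsT in hN; lia.
case e1: ((u0, i0) \in V1).
  apply: (key V1 _ h1) => x; rewrite /c /rl /role e1.
  by case: (x \in V1) => //; case: (x \in V2).
case e2: ((u0, i0) \in V2); last by move: cne0; rewrite /c /rl /role e1 e2.
apply: (key V2 _ h2) => x; rewrite /c /rl /role e1 e2.
by case: (x \in V1) => //; case: (x \in V2).
Qed.
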